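(* Let $T\in(0,\infty)$, let $X_0,X_1$ be Banach spaces with $X_1\hookrightarrow X_0$ densely and continuously, let $A\colon[0,T]\to\mathcal{L}(X_1,X_0)$ be strongly measurable in the strong operator topology, let $p\in(1,\infty)$, $\kappa\in[0,p-1)$, and suppose $A$ has maximal $L^p(0,T,w_\kappa)$-regularity. Then for any $0\le a<b\le T$ and $f\in L^p(a,b,w_\kappa;X_0)$ there exists a unique strong solution $u\in\mathrm{MR}^p(a,b,w_\kappa)$ of $u'+Au=f$ on $(a,b)$, $u(a)=0$, and \[\|u\|_{\mathrm{MR}^p(a,b,w_\kappa)}\le M_{p,\kappa,A}(0,T)\|f\|_{L^p(a,b,w_\kappa;X_0)}.\] In particular, $A$ has maximal $L^p(a,b,w_\kappa)$-regularity and $M_{p,\kappa,A}(a,b)\le M_{p,\kappa,A}(0,T)$.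
   Context: For $\mu\ge0$, $w_\mu(t)=|t|^\mu$ (never shifted, also on subintervals). $L^p(a,b,w_\kappa;X)$ is the space of strongly measurable $f\colon(a,b)\to X$ with $\int_a^bt^\kappa\|f(t)\|_X^pdt<\infty$, $W^{1,p}(a,b,w_\kappa;X)$ analogously, and $\mathrm{MR}^p(a,b,w_\kappa):=L^p(a,b,w_\kappa;X_1)\cap W^{1,p}(a,b,w_\kappa;X_0)$ with norm $\max\{\|u\|_{L^p(a,b,w_\kappa;X_1)},\|u\|_{W^{1,p}(a,b,w_\kappa;X_0)}\}$. A strong solution of $u'+Au=f$ on $(a,b)$, $u(a)=u_a$, is $u\in L^1(a,b;X_1)\cap W^{1,1}(a,b;X_0)$ with $Au\in L^1(a,b;X_0)$, $u(a)=u_a$ and $u'+Au=f$ a.e. on $(a,b)$. $A$ has maximal $L^p(a,b,w_\kappa)$-regularity if for every $f\in L^p(a,b,w_\kappa;X_0)$ there exists a unique strong solution $u\in\mathrm{MR}^p(a,b,w_\kappa)$ with $u(a)=0$, and there is a constant $C$ independent of $f$ such that for every $\tau\in(a,b]$ and every strong solution $v\in\mathrm{MR}^p(a,\tau,w_\kappa)$ of $v'+Av=f$ on $(a,\tau)$ with $v(a)=0$, $\|v\|_{\mathrm{MR}^p(a,\tau,w_\kappa)}\le C\|f\|_{L^p(a,\tau,w_\kappa;X_0)}$. The infimum of all such $C$ is $M_{p,\kappa,A}(a,b)$. *)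

(* Defs.v *)
From HB Require Import structures.
From mathcomp Require Import all_boot all_order all_algebra.
From mathcomp Require Import all_classical all_reals all_analysis.
Set Implicit Arguments. Unset Strict Implicit. Unset Printing Implicit Defensive.
Import Order.TTheory GRing.Theory Num.Theory.
Import numFieldNormedType.Exports.
Local Open Scope classical_set_scope.
Local Open Scope ring_scope.

Section Defs.
Variable R : realType.
Local Notation leb := (@lebesgue_measure R).

Definition simple_fun (V : normedModType R) (s : R -> V) : Prop :=
  exists r : seq (set R * V),
    (forall q, q \in r -> measurable q.1) /\
    s = fun t => \sum_(q <- r) (\1_(q.1) t : R) *: q.2.

Definition strongly_measurable (V : normedModType R) (D : set R)
    (f : R -> V) : Prop :=
  exists s : nat -> R -> V, (forall n, simple_fun (s n)) /\
    {ae leb, forall t, D t -> (fun n => s n t) @ \oo --> f t}.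

(* int_a^b |t|^kappa ||f t||^p dt  (weight w_kappa, never shifted) *)
Definition Lpw_int (V : normedModType R) (p kappa a b : R) (f : R -> V)
    : \bar R :=
  (\int[leb]_(t in [set` `]a, b[]) ((`|t| `^ kappa) * (`|f t| `^ p))%:E)%E.

Definition in_Lpw (V : normedModType R) (p kappa a b : R) (f : R -> V)
    : Prop :=
  strongly_measurable [set` `]a, b[] f /\ (Lpw_int p kappa a b f < +oo)%E.

Definition Lpw_norm (V : normedModType R) (p kappa a b : R) (f : R -> V)
    : R :=
  fine (Lpw_int p kappa a b f) `^ p^-1.

(* u : [a,b] -> V (continuous representative) is absolutely continuous
   with derivative g in L^1(a,b;V):  u t - u s = Bochner-int_s^t g,
   expressed through all continuous linear functionals (which is
   equivalent to the Bochner identity by Hahn-Banach). *)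
Definition W11_deriv (V : normedModType R) (a b : R) (u g : R -> V) : Prop :=
  in_Lpw 1 0 a b u /\ in_Lpw 1 0 a b g /\
  forall l : {linear V -> R^o}, continuous l ->
    forall s t, a <= s -> s <= t -> t <= b ->
      l (u t) - l (u s) =
        fine (\int[leb]_(x in [set` `[s, t]]) (l (g x))%:E)%E.

Variables (X0 X1 : normedModType R) (J : X1 -> X0) (A : R -> X1 -> X0).

(* The solution is
   given by: u : R -> X0 (its continuous representative on [a,b]),
   v : R -> X1 with u = J o v a.e. (u as an element of L^1(a,b;X1)),
   and g = u' (its weak derivative in X0). *)
Definition strong_sol (a b : R) (f : R -> X0) (ua : X0)
    (u : R -> X0) (v : R -> X1) (g : R -> X0) : Prop :=
  [/\ in_Lpw 1 0 a b v,
      {ae leb, forall t, [set` `]a, b[] t -> u t = J (v t)},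
      W11_deriv a b u g,
      in_Lpw 1 0 a b (fun t => A t (v t)) &
      u a = ua /\
      {ae leb, forall t, [set` `]a, b[] t -> g t + A t (v t) = f t}].

Definition in_MR (p kappa a b : R) (u : R -> X0) (v : R -> X1) (g : R -> X0)
    : Prop :=
  [/\ in_Lpw p kappa a b v, in_Lpw p kappa a b u & in_Lpw p kappa a b g].

Definition MR_norm (p kappa a b : R) (u : R -> X0) (v : R -> X1)
    (g : R -> X0) : R :=
  Num.max (Lpw_norm p kappa a b v)
          (Lpw_norm p kappa a b u + Lpw_norm p kappa a b g).

Definition MR_bound (p kappa a b C : R) : Prop :=
  forall f : R -> X0, in_Lpw p kappa a b f ->
  forall tau, a < tau -> tau <= b ->
  forall u v g, strong_sol a tau f 0 u v g -> in_MR p kappa a tau u v g ->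
    MR_norm p kappa a tau u v g <= C * Lpw_norm p kappa a tau f.

Definition max_reg (p kappa a b : R) : Prop :=
  (forall f : R -> X0, in_Lpw p kappa a b f ->
     (exists u v g, strong_sol a b f 0 u v g /\ in_MR p kappa a b u v g) /\
     (forall u1 v1 g1 u2 v2 g2,
        strong_sol a b f 0 u1 v1 g1 -> in_MR p kappa a b u1 v1 g1 ->
        strong_sol a b f 0 u2 v2 g2 -> in_MR p kappa a b u2 v2 g2 ->
        {in [set` `[a, b]], u1 =1 u2})) /\
  exists C, MR_bound p kappa a b C.

Definition M_const (p kappa a b : R) : \bar R :=
  ereal_inf [set C%:E | C in [set C : R | 0 <= C /\ MR_bound p kappa a b C]].

End Defs.

(* Main.v *)
Require Import Defs.
From HB Require Import structures.
From mathcomp Require Import all_boot all_order all_algebra.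
From mathcomp Require Import all_classical all_reals all_analysis.
From mathcomp Require Import measurable_realfun.
Import Order.TTheory GRing.Theory Num.Theory.
Import numFieldNormedType.Exports.
Local Open Scope classical_set_scope.
Local Open Scope ring_scope.


Section K1.
Local Open Scope ereal_scope.
Context d (T : measurableType d) (R : realType).
Variable mu : {measure set T -> \bar R}.
Import HBNNSimple.

Definition nnint (f : T -> \bar R) := ereal_sup [set sintegral mu h |
  h in [set h : {nnsfun T >-> R} | forall x, (h x)%:E <= f x]].

Lemma integral_nnint D f : \int[mu]_(x in D) f x =
  nnint ((f \_ D) ^\+) - nnint ((f \_ D) ^\-).
Proof. by []. Qed.

Lemma sintegral_int (h : {nnsfun T >-> R}) :
  sintegral mu h = \int[mu]_x (h x)%:E.
Proof. by rewrite integral_nnsfun// patch_setT. Qed.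

Lemma nnint_ae_le (f g : T -> \bar R) : (forall x, 0 <= g x) ->
  {ae mu, forall x, f x <= g x} -> nnint f <= nnint g.
Proof.
move=> g0 [N [mN N0 sN]].
apply: ge_ereal_sup => _ [h /= hf <-].
pose h' := mul_nnsfun h (indic_nnsfun R (measurableC mN)).
have h'E x : h' x = (h x * \1_(~` N) x)%R by [].
apply: ereal_sup_ubound; exists h' => /=.
  move=> x; rewrite mindicE; case: (boolP (x \in ~` N)) => xN.
    rewrite mulr1; apply: le_trans (hf x) _.
    apply: contrapT => /negP; rewrite -ltNge => gf.
    have : N x by apply: sN => /= H; move: gf; rewrite ltNge H.
    by move: xN; rewrite inE.
  by rewrite mulr0.
rewrite !sintegral_int; apply: ae_eq_integral => //.
- exact/measurable_EFinP.
- exact/measurable_EFinP.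
- exists N; split => // x /= /not_implyP [_ H]; apply: contrapT => Nx.
  apply: H; rewrite /= mindicE.
  by rewrite (_ : (x \in ~` N) = true) ?mulr1//; apply/mem_set.
Qed.

Lemma nnint_ae_eq (f g : T -> \bar R) : (forall x, 0 <= f x) -> (forall x, 0 <= g x) ->
  {ae mu, forall x, f x = g x} -> nnint f = nnint g.
Proof.
move=> f0 g0 fg; apply/le_anti/andP; split; apply: nnint_ae_le => //.
  by apply: filterS fg => x ->.
by apply: filterS fg => x ->.
Qed.

Lemma integral_ae_le D f g : (forall x, D x -> 0 <= f x) ->
  (forall x, D x -> 0 <= g x) ->
  {ae mu, forall x, D x -> f x <= g x} ->
  \int[mu]_(x in D) f x <= \int[mu]_(x in D) g x.
Proof.
move=> f0 g0 fg; rewrite !ge0_integralE//.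
apply: (@nnint_ae_le (f \_ D) (g \_ D)).
  by move=> x; rewrite patchE; case: ifPn => // /set_mem; exact: g0.
apply: filterS fg => x H; rewrite !patchE; case: ifPn => // /set_mem; exact: H.
Qed.

Lemma integral_ae_eqD D f g :
  {ae mu, forall x, D x -> f x = g x} ->
  \int[mu]_(x in D) f x = \int[mu]_(x in D) g x.
Proof.
move=> fg; rewrite !integral_nnint; congr (_ - _); apply: nnint_ae_eq => //.
- apply: filterS fg => x H; rewrite ?funeposE ?funenegE !patchE; case: ifPn => // /set_mem Dx.
  by rewrite H.
- apply: filterS fg => x H; rewrite ?funeposE ?funenegE !patchE; case: ifPn => // /set_mem Dx.
  by rewrite H.
Qed.

End K1.
#[global] Instance leb_ae_filter (R : realType) :
  Filter (nbhs (almost_everywhere (@lebesgue_measure R))) :=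
  ae_filter_ringOfSetsType _.
#[global] Instance leb_ae_filter' (R : realType) :
  Filter (almost_everywhere (@lebesgue_measure R)) :=
  ae_filter_ringOfSetsType _.

Section SM.
Context {R : realType}.
Local Notation leb := (@lebesgue_measure R).
Context {V : normedModType R}.

Lemma simple_fun0 : simple_fun (fun _ : R => 0 : V).
Proof. by exists [::]; split => //; apply/funext => t; rewrite big_nil. Qed.

Lemma simple_funB (s1 s2 : R -> V) : simple_fun s1 -> simple_fun s2 ->
  simple_fun (fun t => s1 t - s2 t).
Proof.
move=> [r1 [m1 ->]] [r2 [m2 ->]].
exists (r1 ++ map (fun q => (q.1, - q.2)) r2); split.
  move=> q; rewrite mem_cat => /orP[/m1//|/mapP[q' /m2 ? ->]]//.
apply/funext => t; rewrite big_cat big_map /= -sumrN; congr (_ + _).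
by apply: eq_bigr => q _; rewrite scalerN.
Qed.

Lemma simple_fun_indic (A : set R) (s : R -> V) : measurable A -> simple_fun s ->
  simple_fun (fun t => (\1_A t : R) *: s t).
Proof.
move=> mA [r [m ->]].
exists (map (fun q => (q.1 `&` A, q.2)) r); split.
  by move=> q /mapP[q' /m ? ->]; exact: measurableI.
apply/funext => t; rewrite big_map scaler_sumr; apply: eq_bigr => q _ /=.
by rewrite indicI /= scalerA mulrC.
Qed.

Lemma SM_ae {D : set R} {f F : R -> V} : strongly_measurable D f ->
  {ae leb, forall t, D t -> F t = f t} -> strongly_measurable D F.
Proof.
move=> [s [ss ae]] fF; exists s; split => //.
by apply: filterS2 ae fF => t H1 H2 Dt; rewrite H2//; exact: H1.
Qed.

Lemma SM_mono {D D' : set R} {f : R -> V} : D' `<=` D ->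
  strongly_measurable D f -> strongly_measurable D' f.
Proof.
move=> DD [s [ss ae]]; exists s; split => //.
by apply: filterS ae => t H Dt; exact/H/DD.
Qed.

Lemma SM_sub {D : set R} {f1 f2 : R -> V} : strongly_measurable D f1 ->
  strongly_measurable D f2 -> strongly_measurable D (fun t => f1 t - f2 t).
Proof.
move=> [s1 [ss1 ae1]] [s2 [ss2 ae2]].
exists (fun n t => s1 n t - s2 n t); split.
  by move=> n; exact: simple_funB.
by apply: filterS2 ae1 ae2 => t H1 H2 Dt; apply: cvgB; [exact: H1|exact: H2].
Qed.

Lemma SM_patch (D D' : set R) (f : R -> V) : measurable D ->
  strongly_measurable D f ->
  strongly_measurable D' (fun t => if t \in D then f t else 0).
Proof.
move=> mD [s [ss ae]].
exists (fun n t => (\1_D t : R) *: s n t); split.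
  by move=> n; exact: simple_fun_indic.
apply: filterS ae => t H D't; rewrite indicE; case: ifPn => tD.
  by under eq_fun do rewrite scale1r; apply: H; exact: set_mem.
by under eq_fun do rewrite scale0r; exact: cvg_cst.
Qed.

Lemma SM0 (D : set R) : strongly_measurable D (fun _ => 0 : V).
Proof.
exists (fun _ _ => 0); split; first by move=> n; exact: simple_fun0.
by apply: nearW => t _; exact: cvg_cst.
Qed.


Lemma ae_neq (a : R) : {ae leb, forall t, t != a}.
Proof.
exists [set a]; split => //; first exact: lebesgue_measure_set1.
by move=> t /= /negP; rewrite negbK => /eqP.
Qed.

Lemma simple_meas (s : R -> V) (psi : V -> R) : simple_fun s ->
  measurable_fun setT (fun t => psi (s t)).
Proof.
move=> [r [m ->]].
suff H : forall (w : V) (psi : V -> R), measurable_fun setT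
    (fun t => psi (w + \sum_(q <- r) (\1_(q.1) t : R) *: q.2)).
  by have := H 0 psi; under eq_fun do rewrite add0r.
elim: r m => [|q r IH] m w psi'.
  by under eq_fun do rewrite big_nil; exact: measurable_cst.
have mq : measurable q.1 by apply: m; rewrite mem_head.
have m' : forall q', q' \in r -> measurable q'.1.
  by move=> q' qr; apply: m; rewrite in_cons qr orbT.
have E : (fun t => psi' (w + \sum_(q0 <- q :: r) (\1_(q0.1) t : R) *: q0.2)) =
  (fun t => (\1_(q.1) t : R) * psi' ((w + q.2) + \sum_(q0 <- r) (\1_(q0.1) t : R) *: q0.2)
   + (1 - \1_(q.1) t) * psi' (w + \sum_(q0 <- r) (\1_(q0.1) t : R) *: q0.2)).
  apply/funext => t; rewrite big_cons indicE; case: (t \in q.1) => /=.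
    by rewrite scale1r mul1r subrr mul0r addr0 addrA.
  by rewrite scale0r add0r mul0r add0r subr0 mul1r.
rewrite E; apply: measurable_funD; apply: measurable_funM.
- exact: measurable_indic.
- exact: IH.
- by apply: measurable_funB; [exact: measurable_cst|exact: measurable_indic].
- exact: IH.
Qed.

Lemma SM_version {D : set R} {f : R -> V} {psi : V -> R} : measurable D ->
  continuous psi -> strongly_measurable D f ->
  exists G : R -> R, measurable_fun setT G /\
    {ae leb, forall t, D t -> psi (f t) = G t}.
Proof.
move=> mD cpsi [s [ss [N [mN N0 sN]]]].
pose E := ~` N `&` D.
have mE : measurable E by apply: measurableI => //; exact: measurableC.
have EP t : t \in E -> (fun n => s n t) @ \oo --> f t.
  move=> /set_mem [Nt Dt]; apply: contrapT => H; apply: Nt; apply: sN.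
  by move=> /(_ Dt).
exists (fun t => if t \in E then psi (f t) else 0); split.
  apply: (measurable_fun_cvg (h := fun n t => (\1_E t : R) * psi (s n t))).
    move=> n; apply: measurable_funM; first exact: measurable_indic.
    exact: simple_meas.
  move=> t _; rewrite indicE; case: ifPn => tE.
    under eq_fun do rewrite mul1r.
    exact: (@continuous_cvg _ _ _ _ _ _ psi (f t) (cpsi (f t)) (EP t tE)).
  by under eq_fun do rewrite mul0r; exact: cvg_cst.
exists N; split => // t /= H; apply: contrapT => Nt; apply: H => Dt.
by rewrite (_ : t \in E = true)//; apply/mem_set.
Qed.

End SM.

Section Lpw.
Context {R : realType}.
Local Notation leb := (@lebesgue_measure R).
Context {V : normedModType R}.
Implicit Types (p kappa c d : R) (f F : R -> V).

Lemma itv_oo_sub {c d c' d' t : R} : c' <= c -> d <= d' ->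
  c < t < d -> c' < t < d'.
Proof.
move=> h1 h2 /andP[h3 h4]; apply/andP; split; [exact: le_lt_trans h3|exact: lt_le_trans h2].
Qed.

Lemma memooE c d t : (t \in [set` `]c, d[]) = (c < t < d).
Proof. by apply/idP/idP => [/set_mem|H]; [rewrite /= in_itv|apply/mem_set; rewrite /= in_itv]. Qed.

Lemma Lpw_int_ge0 p kappa c d f : (0 <= Lpw_int p kappa c d f)%E.
Proof.
by apply: integral_ge0 => t _; rewrite lee_fin mulr_ge0 // powR_ge0.
Qed.

Lemma Lpw_norm_ge0 p kappa c d f : 0 <= Lpw_norm p kappa c d f.
Proof. exact: powR_ge0. Qed.

Lemma Lpw_int_mono {p kappa c d c' d' : R} {f : R -> V} : c' <= c -> d <= d' ->
  (Lpw_int p kappa c d f <= Lpw_int p kappa c' d' f)%E.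
Proof.
move=> h1 h2; rewrite /Lpw_int [X in (X <= _)%E]integral_mkcond [X in (_ <= X)%E]integral_mkcond.
apply: integral_ae_le => //.
- by move=> t _; apply: erestrict_ge0 => x _; rewrite lee_fin mulr_ge0// powR_ge0.
- by move=> t _; apply: erestrict_ge0 => x _; rewrite lee_fin mulr_ge0// powR_ge0.
apply: nearW => t _; rewrite !patchE !memooE.
case: ifPn => H1; first by rewrite (itv_oo_sub h1 h2 H1).
by case: ifPn => // _; rewrite lee_fin mulr_ge0// powR_ge0.
Qed.

Lemma Lpw_int_eqD {p kappa c d : R} {f F : R -> V} : (forall t, c < t < d -> F t = f t) ->
  Lpw_int p kappa c d F = Lpw_int p kappa c d f.
Proof.
move=> H; apply: eq_integral => t; rewrite memooE => /H ->//.
Qed.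

Lemma Lpw_int_patch {p kappa c d c' d' : R} {f F : R -> V} : 0 < p -> c' <= c -> d <= d' ->
  {ae leb, forall t, c' < t < d' -> F t = if c < t < d then f t else 0} ->
  Lpw_int p kappa c' d' F = Lpw_int p kappa c d f.
Proof.
move=> p0 h1 h2 H; rewrite /Lpw_int integral_mkcond [in RHS]integral_mkcond.
apply: integral_ae_eqD; apply: filterS H => t H _.
rewrite !patchE !memooE.
case: ifPn => H1; case: ifPn => H2.
- by rewrite H // H2.
- by rewrite H // (negbTE H2) normr0 powR0 ?mulr0// gt_eqF.
- by rewrite (itv_oo_sub h1 h2 H2) in H1.
- by [].
Qed.

Lemma Lpw_norm_patch {p kappa c d c' d' : R} {f F : R -> V} : 0 < p -> c' <= c -> d <= d' ->
  {ae leb, forall t, c' < t < d' -> F t = if c < t < d then f t else 0} ->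
  Lpw_norm p kappa c' d' F = Lpw_norm p kappa c d f.
Proof. by move=> p0 h1 h2 H; rewrite /Lpw_norm (Lpw_int_patch p0 h1 h2 H). Qed.

End Lpw.

Section Lpw2.
Context {R : realType}.
Local Notation leb := (@lebesgue_measure R).
Context {V : normedModType R}.

Lemma wmeas (kappa : R) : measurable_fun setT (fun t : R => `|t| `^ kappa).
Proof. exact: (measurableT_comp (@measurable_powR R kappa) (@normr_measurable R setT)). Qed.

Lemma in_Lpw_mono {p kappa c d c' d' : R} {f : R -> V} : c <= c' -> d' <= d ->
  in_Lpw p kappa c d f -> in_Lpw p kappa c' d' f.
Proof.
move=> h1 h2 [sm fin]; split.
  apply: SM_mono sm => t /=; rewrite !in_itv /= => H; exact: (itv_oo_sub h1 h2 H).
exact: le_lt_trans (Lpw_int_mono h1 h2) fin.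
Qed.

Lemma in_Lpw_eqD {p kappa c d : R} {f F : R -> V} :
  (forall t, c < t < d -> F t = f t) -> in_Lpw p kappa c d f -> in_Lpw p kappa c d F.
Proof.
move=> H [sm fin]; split; last by rewrite (Lpw_int_eqD H).
apply: (SM_ae sm); apply: nearW => t /=; rewrite in_itv /=; exact: H.
Qed.

Lemma in_Lpw_patch {p kappa c d c' d' : R} {f F : R -> V} : 0 < p -> c' <= c -> d <= d' ->
  {ae leb, forall t, c' < t < d' -> F t = if c < t < d then f t else 0} ->
  in_Lpw p kappa c d f -> in_Lpw p kappa c' d' F.
Proof.
move=> p0 h1 h2 H [sm fin]; split; last by rewrite (Lpw_int_patch p0 h1 h2 H).
have := @SM_patch R V [set` `]c, d[] [set` `]c', d'[] f (measurable_itv _) sm.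
move=> sm'; apply: (SM_ae sm'); apply: filterS H => t H /=; rewrite in_itv /= => Ht.
by rewrite H // memooE.
Qed.

Lemma Lpw_int0 (p kappa c d : R) : 0 < p -> Lpw_int p kappa c d (fun _ => 0 : V) = 0%E.
Proof.
move=> p0; apply: integral0_eq => t _; by rewrite normr0 powR0 ?mulr0// gt_eqF.
Qed.

Lemma Lpw_norm0 (p kappa c d : R) : 0 < p -> Lpw_norm p kappa c d (fun _ => 0 : V) = 0.
Proof. by move=> p0; rewrite /Lpw_norm Lpw_int0 //= powR0 // invr_eq0 gt_eqF. Qed.

Lemma in_Lpw0 (p kappa c d : R) : 0 < p -> in_Lpw p kappa c d (fun _ => 0 : V).
Proof. by move=> p0; split; [exact: SM0|rewrite Lpw_int0]. Qed.

Lemma Lpw_version (p kappa : R) {c d : R} {g : R -> V} :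
  strongly_measurable [set` `]c, d[] g ->
  exists G : R -> R, [/\ measurable_fun setT G, (forall t, 0 <= G t),
    {ae leb, forall t, c < t < d -> `|g t| = G t} &
    Lpw_int p kappa c d g =
      (\int[leb]_(t in [set` `]c, d[]) ((`|t| `^ kappa) * (G t `^ p))%:E)%E].
Proof.
move=> sm.
have [G [mG aeG]] := SM_version (measurable_itv `]c, d[) (@norm_continuous _ V) sm.
have aeG' : {ae leb, forall t, c < t < d -> `|g t| = `|G t|}.
  apply: filterS aeG => t H Ht; rewrite -H ?normr_id//; rewrite /= in_itv; exact: Ht.
exists (fun t => `|G t|); split.
- exact: (measurableT_comp (@normr_measurable R setT) mG).
- by move=> t; exact: normr_ge0.
- exact: aeG'.
- apply: integral_ae_eqD; apply: filterS aeG' => t H Ht.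
  by rewrite H// -memooE.
Qed.

Lemma powR_sub_le (p : R) (x y : V) : 0 < p ->
  `|x - y| `^ p <= 2 `^ p * (`|x| `^ p + `|y| `^ p).
Proof.
move=> p0.
have [m [m0 hm hm']] : exists m : R, [/\ 0 <= m, `|x| + `|y| <= 2 * m &
    m `^ p <= `|x| `^ p + `|y| `^ p].
  have [xy|yx] := leP `|x| `|y|.
    exists `|y|; split => //; first by rewrite mulr2n mulrDl mul1r lerD2r.
    by rewrite lerDr powR_ge0.
  exists `|x|; split => //; first by rewrite mulr2n mulrDl mul1r lerD2l ltW.
  by rewrite lerDl powR_ge0.
apply: (@le_trans _ _ ((2 * m) `^ p)).
  apply: ge0_ler_powR; first exact: ltW.
  - by rewrite nnegrE.
  - by rewrite nnegrE mulr_ge0.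
  - exact: le_trans (ler_normB _ _) hm.
rewrite powRM// ler_wpM2l// powR_ge0//.
Qed.

Lemma in_Lpw_sub {p kappa c d : R} {f1 f2 : R -> V} : 0 < p ->
  in_Lpw p kappa c d f1 -> in_Lpw p kappa c d f2 ->
  in_Lpw p kappa c d (fun t => f1 t - f2 t).
Proof.
move=> p0 [sm1 fin1] [sm2 fin2]; split; first exact: SM_sub.
have [G1 [mG1 G10 ae1 E1]] := Lpw_version p kappa sm1.
have [G2 [mG2 G20 ae2 E2]] := Lpw_version p kappa sm2.
pose H1 t := `|t| `^ kappa * G1 t `^ p.
pose H2 t := `|t| `^ kappa * G2 t `^ p.
have mH1 : measurable_fun setT H1.
  apply: measurable_funM; first exact: wmeas.
  exact: (measurableT_comp (@measurable_powR R p) mG1).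
have mH2 : measurable_fun setT H2.
  apply: measurable_funM; first exact: wmeas.
  exact: (measurableT_comp (@measurable_powR R p) mG2).
have H10 t : 0 <= H1 t by apply: mulr_ge0; apply: powR_ge0.
have H20 t : 0 <= H2 t by apply: mulr_ge0; apply: powR_ge0.
have mD : measurable [set` `]c, d[] by exact: measurable_itv.
apply: (@le_lt_trans _ _ (\int[leb]_(t in [set` `]c, d[])
    ((2 `^ p)%:E * ((H1 t)%:E + (H2 t)%:E)))%E).
  apply: integral_ae_le.
  - by move=> t _; rewrite lee_fin; apply: mulr_ge0; apply: powR_ge0.
  - move=> t _; rewrite -EFinD -EFinM lee_fin; apply: mulr_ge0; first exact: powR_ge0.
    exact: addr_ge0.
  apply: filterS2 ae1 ae2 => t h1 h2 Ht.
  rewrite -EFinD -EFinM lee_fin /H1 /H2 -(h1 Ht) -(h2 Ht).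
  rewrite -mulrDr mulrCA; apply: ler_wpM2l; first exact: powR_ge0.
  exact: powR_sub_le.
have m12 : measurable_fun [set` `]c, d[] (fun t => (H1 t)%:E + (H2 t)%:E)%E.
  apply/measurable_EFinP; apply: measurable_funD.
    exact: (measurable_funS measurableT (@subsetT _ _) mH1).
  exact: (measurable_funS measurableT (@subsetT _ _) mH2).
rewrite (@ge0_integralZl_EFin _ (measurableTypeR R) R leb _ (measurable_itv _)); last exact: powR_ge0; last exact: m12; last first.
  by move=> t _; rewrite -EFinD lee_fin; exact: addr_ge0.
have mH1' : measurable_fun [set` `]c, d[] (fun t => (H1 t)%:E).
  by apply/measurable_EFinP; exact: (measurable_funS measurableT (@subsetT _ _) mH1).
have mH2' : measurable_fun [set` `]c, d[] (fun t => (H2 t)%:E).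
  by apply/measurable_EFinP; exact: (measurable_funS measurableT (@subsetT _ _) mH2).
rewrite (@ge0_integralD _ (measurableTypeR R) R leb _ (measurable_itv _)); last exact: mH2'; last first.
- by move=> t _; rewrite lee_fin.
- exact: mH1'.
- by move=> t _; rewrite lee_fin.
rewrite -E1 -E2.
have f1fin : Lpw_int p kappa c d f1 \is a fin_num.
  by rewrite ge0_fin_numE ?Lpw_int_ge0.
have f2fin : Lpw_int p kappa c d f2 \is a fin_num.
  by rewrite ge0_fin_numE ?Lpw_int_ge0.
by rewrite -(fineK f1fin) -(fineK f2fin) -EFinD -EFinM ltry.
Qed.

End Lpw2.

Section Lpw3.
Context {R : realType}.
Local Notation leb := (@lebesgue_measure R).
Context {V : normedModType R}.

Lemma Lpw_int_zero {p kappa c d : R} {g : R -> V} : 0 <= c -> 0 < p ->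
  strongly_measurable [set` `]c, d[] g -> Lpw_int p kappa c d g = 0%E ->
  {ae leb, forall t, c < t < d -> g t = 0}.
Proof.
move=> c0 p0 sm I0.
have [G [mG G0 aeG E]] := Lpw_version p kappa sm.
pose H t := `|t| `^ kappa * G t `^ p.
have mH : measurable_fun setT H.
  apply: measurable_funM; first exact: wmeas.
  exact: (measurableT_comp (@measurable_powR R p) mG).
have H0 t : 0 <= H t by apply: mulr_ge0; apply: powR_ge0.
have mH' : measurable_fun [set` `]c, d[] (EFin \o H).
  by apply/measurable_EFinP; exact: (measurable_funS measurableT (@subsetT _ _) mH).
have : ae_eq leb [set` `]c, d[] (EFin \o H) (cst 0%E).
  apply/(@ae_eq_integral_abs _ (measurableTypeR R) R leb _ (measurable_itv _) _ mH').
  rewrite -[RHS]I0 E; apply: eq_integral => t _ /=.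
  by rewrite ger0_norm.
move=> aeH; apply: filterS2 aeG aeH => t h1 h2 Ht.
have Ht' : [set` `]c, d[] t by rewrite /= in_itv.
have := h2 Ht' => /= /eqP; rewrite eqe => /eqP; rewrite /H => /eqP.
have t0 : 0 < `|t| `^ kappa.
  apply: powR_gt0; rewrite normr_gt0 gt_eqF//.
  by case/andP: Ht => ct _; exact: le_lt_trans ct.
rewrite mulf_eq0 (gt_eqF t0) /= => /eqP /powR_eq0_eq0 Gt.
by apply/eqP; rewrite -normr_eq0 h1 // Gt.
Qed.

Lemma Lpw_norm_eq0 {p kappa c d : R} {g : R -> V} : 0 < p ->
  (Lpw_int p kappa c d g < +oo)%E -> Lpw_norm p kappa c d g = 0 ->
  Lpw_int p kappa c d g = 0%E.
Proof.
move=> p0 fin /powR_eq0_eq0 H.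
have fn : Lpw_int p kappa c d g \is a fin_num by rewrite ge0_fin_numE ?Lpw_int_ge0.
by rewrite -(fineK fn) H.
Qed.

Lemma lin_bound (l : {linear V -> R^o}) : continuous l ->
  exists k : R, 0 < k /\ forall x, `|l x| <= k * `|x|.
Proof.
move/linear_bounded_continuous => /linear_boundedP [y [yreal fr]].
exists (Num.max 1 (y + 1)); split; first by rewrite lt_max ltr01.
apply: fr; rewrite lt_max; apply/orP; right; by rewrite ltrDl ltr01.
Qed.

Lemma cc_in_oo {c d s t x : R} : c <= s -> t <= d -> s <= x <= t ->
  x != c -> x != d -> c < x < d.
Proof.
move=> cs td /andP[sx xt] xc xd; apply/andP; split.
  by rewrite lt_neqAle eq_sym xc (le_trans cs sx).
by rewrite lt_neqAle xd (le_trans xt td).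
Qed.

Lemma int_cc_ae {c d s t : R} {F G : R -> \bar R} : c <= s -> t <= d ->
  {ae leb, forall x, c < x < d -> F x = G x} ->
  (\int[leb]_(x in [set` `[s, t]]) F x = \int[leb]_(x in [set` `[s, t]]) G x)%E.
Proof.
move=> cs td H; apply: integral_ae_eqD.
apply: filterS3 H (ae_neq c) (ae_neq d) => x H xc xd /= Hx.
by apply: H; apply: (cc_in_oo cs td _ xc xd); rewrite in_itv /= in Hx.
Qed.

Lemma int_l_ae0 (l : {linear V -> R^o}) {c d s t : R} {g : R -> V} :
  c <= s -> t <= d -> {ae leb, forall x, c < x < d -> g x = 0} ->
  (\int[leb]_(x in [set` `[s, t]]) (l (g x))%:E)%E = 0%E.
Proof.
move=> cs td H; rewrite (int_cc_ae (G := fun=> 0%E) cs td) ?integral0//.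
by apply: filterS H => x H Hx; rewrite H// linear0.
Qed.

Lemma int_l_version (l : {linear V -> R^o}) {c d : R} {g : R -> V} :
  continuous l -> in_Lpw 1 0 c d g ->
  exists G : R -> R, [/\ measurable_fun setT G,
    {ae leb, forall x, c < x < d -> l (g x) = G x} &
    forall s t, c <= s -> t <= d -> leb.-integrable [set` `[s, t]] (EFin \o G)].
Proof.
move=> cl [sm fin].
have [G [mG aeG]] := SM_version (measurable_itv `]c, d[) cl sm.
have [Gn [mGn Gn0 aen En]] := Lpw_version 1 0 sm.
have [k [k0 hk]] := lin_bound l cl.
exists G; split => //.
move=> s t cs td; apply/integrableP; split.
  by apply/measurable_EFinP; exact: (measurable_funS measurableT (@subsetT _ _) mG).
apply: (@le_lt_trans _ _ (\int[leb]_(x in [set` `]c, d[]) (k * Gn x)%:E)%E).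
  rewrite [X in (X <= _)%E]integral_mkcond [X in (_ <= X)%E]integral_mkcond.
  apply: integral_ae_le.
  - by move=> x _; apply: erestrict_ge0 => y _; exact: abse_ge0.
  - by move=> x _; apply: erestrict_ge0 => y _; rewrite lee_fin mulr_ge0// ltW.
  have aecd : {ae leb, forall x, (x != c) && (x != d)}.
    by apply: filterS2 (ae_neq c) (ae_neq d) => x -> ->.
  apply: filterS3 aeG aen aecd => x h1 h2 /andP[xc xd] _; rewrite !patchE.
  case: ifPn => Hx; last first.
    by case: ifPn => _ //; rewrite lee_fin mulr_ge0// ltW.
  have Hx' : c < x < d.
    by apply: (cc_in_oo cs td _ xc xd); move/set_mem: Hx; rewrite /= in_itv.
  rewrite (_ : x \in _ = true); last by rewrite memooE.
  rewrite /= lee_fin -h1; last by rewrite /= in_itv.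
  by rewrite -h2//; exact: hk.
under eq_integral do rewrite EFinM.
rewrite (@ge0_integralZl_EFin _ (measurableTypeR R) R leb _ (measurable_itv _)); last exact: ltW; last first.
  by apply/measurable_EFinP; exact: (measurable_funS measurableT (@subsetT _ _) mGn).
  by move=> x _; rewrite lee_fin.
have -> : (\int[leb]_(x in [set` `]c, d[]) (Gn x)%:E)%E = Lpw_int 1 0 c d g.
  rewrite En; apply: eq_integral => x _; by rewrite powRr0 mul1r powRr1.
have fn : Lpw_int 1 0 c d g \is a fin_num by rewrite ge0_fin_numE ?Lpw_int_ge0.
by rewrite -(fineK fn) -EFinM ltry.
Qed.

End Lpw3.

Definition zext {R : realType} {W : zmodType} (a : R) (h : R -> W) :=
  fun t => if t < a then 0 else h t.

Section Zext.
Context {R : realType}.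
Local Notation leb := (@lebesgue_measure R).
Context {W : normedModType R}.

Lemma zext_ae (a tau : R) (h : R -> W) :
  {ae leb, forall t, 0 < t < tau -> zext a h t = if a < t < tau then h t else 0}.
Proof.
apply: filterS (ae_neq a) => t ta /andP[_ tt]; rewrite /zext.
have [ta'|ta'] := ltP t a; first by rewrite ltNge (ltW ta').
have at' : a < t by rewrite lt_neqAle eq_sym ta ta'.
by rewrite at' tt.
Qed.

Lemma in_Lpw_zext {p kappa a tau : R} {h : R -> W} : 0 < p -> 0 <= a ->
  in_Lpw p kappa a tau h -> in_Lpw p kappa 0 tau (zext a h).
Proof. by move=> p0 a0; apply: (in_Lpw_patch p0 a0 (lexx _) (zext_ae a tau h)). Qed.

Lemma Lpw_norm_zext {p kappa a tau : R} {h : R -> W} : 0 < p -> 0 <= a ->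
  Lpw_norm p kappa 0 tau (zext a h) = Lpw_norm p kappa a tau h.
Proof. by move=> p0 a0; rewrite (Lpw_norm_patch p0 a0 (lexx _) (zext_ae a tau h)). Qed.

Lemma W11_zext {a tau : R} {u g : R -> W} : 0 <= a -> u a = 0 ->
  W11_deriv a tau u g -> W11_deriv 0 tau (zext a u) (zext a g).
Proof.
move=> a0 ua [iu [ig H]]; split; first exact: in_Lpw_zext.
split; first exact: in_Lpw_zext.
move=> l cl s t _ st ttau; rewrite /zext.
have [ta|at_] := ltP t a.
  rewrite (le_lt_trans st ta) subrr integral0_eq //=.
  move=> x /=; rewrite in_itv /= => /andP[_ xt].
  by rewrite (le_lt_trans xt ta) linear0.
have [sa|as_] := ltP s a.
  have -> : l (u t) - l 0 = l (u t) - l (u a) by rewrite ua.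
  rewrite (H l cl a t (lexx _) at_ ttau); congr fine.
  rewrite [LHS]integral_mkcond [RHS]integral_mkcond; congr integral.
  apply/funext => x; rewrite !patchE.
  case: ifPn => xat; case: ifPn => xst //.
  - move/set_mem: xat; rewrite /= in_itv /= => /andP[ax _].
    by rewrite ltNge ax.
  - move/set_mem: xat; rewrite /= in_itv /= => /andP[ax xt].
    by move: xst; rewrite (_ : x \in _ = true) //; apply/mem_set; rewrite /= in_itv /= xt (ltW (lt_le_trans sa ax)).
  - have xa : x < a.
      rewrite ltNge; apply/negP => ax; move: xat; rewrite (_ : x \in _ = true)//.
      apply/mem_set; move/set_mem: xst; rewrite /= !in_itv /= => /andP[_ ->].
      by rewrite ax.
    by rewrite xa linear0.

rewrite (H l cl s t as_ st ttau); congr fine.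
apply: eq_integral => x /[!inE] /= /andP[sx _].
by rewrite ltNge (le_trans as_ sx).
Qed.

End Zext.

Section Main.
Context {R : realType}.
Local Notation leb := (@lebesgue_measure R).
Context {X0 X1 : normedModType R} (J : {linear X1 -> X0}) (A : R -> {linear X1 -> X0}).
Local Notation SS := (strong_sol J (fun t => A t)).

Lemma sol_restrict {c d d' : R} {f u g : R -> X0} {v : R -> X1} :
  c < d' -> d' <= d -> SS c d f 0 u v g -> SS c d' f 0 u v g.
Proof.
move=> cd dd [iv aeJ [iu [ig W]] iA [u0 aeE]]; split.
- exact: in_Lpw_mono (lexx c) dd iv.
- apply: filterS aeJ => t h Ht; apply: h; move: Ht; rewrite /= !in_itv /=.
  by move=> /andP[-> td']; exact: lt_le_trans td' dd.
- split; first exact: in_Lpw_mono (lexx c) dd iu.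
  split; first exact: in_Lpw_mono (lexx c) dd ig.
  by move=> l cl s t cs st td; apply: W => //; exact: le_trans dd.
- exact: in_Lpw_mono (lexx c) dd iA.
- split => //; apply: filterS aeE => t h Ht; apply: h; move: Ht; rewrite /= !in_itv /=.
  by move=> /andP[-> td']; exact: lt_le_trans td' dd.
Qed.

Lemma MR_restrict {p kappa c d c' d' : R} {u g : R -> X0} {v : R -> X1} :
  c <= c' -> d' <= d -> in_MR p kappa c d u v g -> in_MR p kappa c' d' u v g.
Proof.
by move=> h1 h2 [iv iu ig]; split; apply: in_Lpw_mono h1 h2 _.
Qed.

Lemma Lpw_norm_mono {W : normedModType R} {p kappa c d c' d' : R} {f : R -> W} :
  0 < p -> c <= c' -> d' <= d -> (Lpw_int p kappa c d f < +oo)%E ->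
  Lpw_norm p kappa c' d' f <= Lpw_norm p kappa c d f.
Proof.
move=> p0 h1 h2 fin; rewrite /Lpw_norm.
have le := Lpw_int_mono (p:=p) (kappa:=kappa) (f:=f) h1 h2.
have fn : Lpw_int p kappa c d f \is a fin_num by rewrite ge0_fin_numE ?Lpw_int_ge0.
have fn' : Lpw_int p kappa c' d' f \is a fin_num.
  by rewrite ge0_fin_numE ?Lpw_int_ge0 //; exact: le_lt_trans le fin.
apply: ge0_ler_powR; first by rewrite invr_ge0 ltW.
- by rewrite nnegrE fine_ge0 ?Lpw_int_ge0.
- by rewrite nnegrE fine_ge0 ?Lpw_int_ge0.
- exact: fine_le.
Qed.

Lemma MR_norm_mono {p kappa c d c' d' : R} {u g : R -> X0} {v : R -> X1} :
  0 < p -> c <= c' -> d' <= d -> in_MR p kappa c d u v g ->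
  MR_norm p kappa c' d' u v g <= MR_norm p kappa c d u v g.
Proof.
move=> p0 h1 h2 [[_ fv] [_ fu] [_ fg]]; rewrite /MR_norm ge_max !le_max.
rewrite (Lpw_norm_mono p0 h1 h2 fv) /=; apply/orP; right.
by apply: lerD; apply: Lpw_norm_mono.
Qed.

Lemma MR_norm_le0 {p kappa c d : R} {u g : R -> X0} {v : R -> X1} :
  MR_norm p kappa c d u v g <= 0 -> Lpw_norm p kappa c d g = 0.
Proof.
rewrite /MR_norm ge_max => /andP[_ H]; apply/le_anti; rewrite Lpw_norm_ge0 andbT.
apply: le_trans H; rewrite lerDr; exact: Lpw_norm_ge0.
Qed.


Lemma sol_zext {a tau : R} {f u g : R -> X0} {v : R -> X1} (F : R -> X0) :
  0 <= a -> (forall t, 0 < t < tau -> F t = if a < t then f t else 0) ->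
  SS a tau f 0 u v g -> SS 0 tau F 0 (zext a u) (zext a v) (zext a g).
Proof.
move=> a0 HF [iv aeJ w11 iA [ua aeE]]; split.
- exact: in_Lpw_zext ltr01 a0 iv.
- apply: filterS2 aeJ (ae_neq a) => t h ne Ht; rewrite /zext.
  have [ta|ta] := ltP t a; first by rewrite linear0.
  apply: h; move: Ht; rewrite /= !in_itv /= => /andP[_ ->].
  by rewrite andbT lt_neqAle eq_sym ne ta.
- exact: W11_zext a0 ua w11.
- apply: (in_Lpw_patch ltr01 a0 (lexx tau) _ iA).
  apply: filterS (zext_ae a tau v) => t h Ht; rewrite h //.
  by case: ifP => _ //; rewrite linear0.
- split.
    rewrite /zext; case: ltP => // a00.
    by rewrite (_ : 0 = a) ?ua //; apply/le_anti; rewrite a0 a00.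
  apply: filterS2 aeE (ae_neq a) => t h ne Ht; rewrite /zext HF; last first.
    by move: Ht; rewrite /= in_itv.
  have [ta|ta] := ltP t a; first by rewrite ltNge (ltW ta) /= linear0 addr0.
  have at' : a < t by rewrite lt_neqAle eq_sym ne ta.
  rewrite at'; apply: h; move: Ht; rewrite /= !in_itv /= => /andP[_ ->].
  by rewrite at'.
Qed.

Lemma MR_zext {p kappa a tau : R} {u g : R -> X0} {v : R -> X1} :
  0 < p -> 0 <= a -> in_MR p kappa a tau u v g ->
  in_MR p kappa 0 tau (zext a u) (zext a v) (zext a g).
Proof. by move=> p0 a0 [iv iu ig]; split; apply: in_Lpw_zext. Qed.

Lemma MR_norm_zext {p kappa a tau : R} {u g : R -> X0} {v : R -> X1} :
  0 < p -> 0 <= a ->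
  MR_norm p kappa 0 tau (zext a u) (zext a v) (zext a g) =
  MR_norm p kappa a tau u v g.
Proof. by move=> p0 a0; rewrite /MR_norm !Lpw_norm_zext. Qed.

Lemma bound_transfer {p kappa a b T C : R} : 0 < p -> 0 <= a -> b <= T ->
  MR_bound J (fun t => A t) p kappa 0 T C ->
  MR_bound J (fun t => A t) p kappa a b C.
Proof.
move=> p0 a0 bT B f fL tau atau taub u v g sol mr.
pose F t := if a < t < b then f t else 0.
have FL : in_Lpw p kappa 0 T F.
  by apply: (in_Lpw_patch p0 a0 bT _ fL); apply: nearW.
have HF : forall t, 0 < t < tau -> F t = if a < t then f t else 0.
  move=> t /andP[_ ttau]; rewrite /F; case: (a < t) => //=.
  by rewrite (lt_le_trans ttau taub).
have aeF : {ae leb, forall t, 0 < t < tau -> F t = if a < t < tau then f t else 0}.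
  apply: nearW => t /andP[_ ttau]; rewrite /F; case: (a < t) => //=.
  by rewrite ttau (lt_le_trans ttau taub).
have := B F FL tau (le_lt_trans a0 atau) (le_trans taub bT) _ _ _
  (sol_zext F a0 HF sol) (MR_zext p0 a0 mr).
by rewrite (MR_norm_zext p0 a0) (Lpw_norm_patch p0 a0 (lexx tau) aeF).
Qed.


Lemma sub4 (x1 x2 y1 y2 : R) : x1 - x2 - (y1 - y2) = (x1 - y1) - (x2 - y2).
Proof. by rewrite !opprB addrACA [RHS]addrACA (addrC (- x2)). Qed.

Lemma W11_sub {a b : R} {u1 u2 g1 g2 : R -> X0} :
  W11_deriv a b u1 g1 -> W11_deriv a b u2 g2 ->
  W11_deriv a b (fun t => u1 t - u2 t) (fun t => g1 t - g2 t).
Proof.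
move=> [iu1 [ig1 W1]] [iu2 [ig2 W2]]; split; first exact: in_Lpw_sub ltr01 iu1 iu2.
split; first exact: in_Lpw_sub ltr01 ig1 ig2.
move=> l cl s t as_ st tb.
rewrite !(linearB l) /= sub4 (W1 l cl s t as_ st tb) (W2 l cl s t as_ st tb).
have [G1 [mG1 ae1 int1]] := int_l_version l cl ig1.
have [G2 [mG2 ae2 int2]] := int_l_version l cl ig2.
have i1' := int1 s t as_ tb.
have i2' := int2 s t as_ tb.
rewrite (int_cc_ae (F := fun x => (l (g1 x))%:E) (G := fun x => (G1 x)%:E) as_ tb); last first.
  by apply: filterS ae1 => x h Hx; congr EFin; exact: h.
rewrite (int_cc_ae (F := fun x => (l (g2 x))%:E) (G := fun x => (G2 x)%:E) as_ tb); last first.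
  by apply: filterS ae2 => x h Hx; congr EFin; exact: h.
rewrite (int_cc_ae (F := fun x => (l (g1 x - g2 x))%:E) (G := fun x => ((G1 x)%:E - (G2 x)%:E)%E) as_ tb); last first.
  by apply: filterS2 ae1 ae2 => x h1 h2 Hx; rewrite linearB /= h1 // h2.
rewrite (@integralB_EFin _ (measurableTypeR R) R leb _ G1 G2 (measurable_itv _) i1' i2').
have f1 := @integrable_fin_num _ (measurableTypeR R) R leb _ (measurable_itv _) _ i1'.
have f2 := @integrable_fin_num _ (measurableTypeR R) R leb _ (measurable_itv _) _ i2'.
by rewrite (fineB f1 f2).
Qed.

End Main.

Section Main2.
Context {R : realType}.
Local Notation leb := (@lebesgue_measure R).
Context {X0 X1 : normedModType R} (J : {linear X1 -> X0}) (A : R -> {linear X1 -> X0}).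
Local Notation SS := (strong_sol J (fun t => A t)).

Lemma sol_sub {a b : R} {f u1 u2 g1 g2 : R -> X0} {v1 v2 : R -> X1} :
  SS a b f 0 u1 v1 g1 -> SS a b f 0 u2 v2 g2 ->
  SS a b (fun _ => 0) 0 (fun t => u1 t - u2 t) (fun t => v1 t - v2 t)
    (fun t => g1 t - g2 t).
Proof.
move=> [iv1 aeJ1 w1 iA1 [ua1 aeE1]] [iv2 aeJ2 w2 iA2 [ua2 aeE2]]; split.
- exact: in_Lpw_sub ltr01 iv1 iv2.
- apply: filterS2 aeJ1 aeJ2 => t h1 h2 Ht.
  by rewrite (linearB J) /= -(h1 Ht) -(h2 Ht).
- exact: W11_sub w1 w2.
- apply: (in_Lpw_eqD (f := fun t => A t (v1 t) - A t (v2 t))).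
    by move=> t _; rewrite (linearB (A t)).
  exact: in_Lpw_sub ltr01 iA1 iA2.
- split; first by rewrite ua1 ua2 subrr.
  apply: filterS2 aeE1 aeE2 => t h1 h2 Ht.
  rewrite (linearB (A t)) /= addrACA -opprD (h1 Ht) (h2 Ht); exact: subrr.
Qed.

Lemma MR_sub {p kappa a b : R} {u1 u2 g1 g2 : R -> X0} {v1 v2 : R -> X1} :
  0 < p -> in_MR p kappa a b u1 v1 g1 -> in_MR p kappa a b u2 v2 g2 ->
  in_MR p kappa a b (fun t => u1 t - u2 t) (fun t => v1 t - v2 t)
    (fun t => g1 t - g2 t).
Proof.
by move=> p0 [a1 b1 c1] [a2 b2 c2]; split; apply: in_Lpw_sub.
Qed.


Lemma sep {p kappa T : R} : 0 < T -> 0 < p ->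
  max_reg J (fun t => A t) p kappa 0 T ->
  forall x : X0, (forall l : {linear X0 -> R^o}, continuous l -> l x = 0) -> x = 0.
Proof.
move=> T0 p0 [EU _] x Hx.
have [[u [v [g [sol mr]]]] uniq] := EU (fun _ => 0) (in_Lpw0 _ _ _ _ p0).
pose u' t := if t == T then u t + x else u t.
have uu : forall t, 0 < t < T -> u' t = u t.
  by move=> t /andP[_ tT]; rewrite /u' lt_eqF.
have lu : forall l : {linear X0 -> R^o}, continuous l -> forall t, l (u' t) = l (u t).
  move=> l cl t; rewrite /u'; case: eqP => _ //.
  by rewrite (linearD l) /= Hx // addr0.
have sol' : SS 0 T (fun _ => 0) 0 u' v g.
  case: (sol) => iv aeJ [iu [ig W]] iA [u0 aeE]; split.
  - exact: iv.
  - apply: filterS aeJ => t h Ht; rewrite uu; first exact: h.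
    by move: Ht; rewrite /= in_itv.
  - split; first exact: in_Lpw_eqD uu iu.
    split; first exact: ig.
    by move=> l cl s t s0 st tT; rewrite !lu //; exact: W.
  - exact: iA.
  - by split; [rewrite /u' lt_eqF|exact: aeE].
have mr' : in_MR p kappa 0 T u' v g.
  by case: (mr) => m1 m2 m3; split; [exact: m1|exact: in_Lpw_eqD uu m2|exact: m3].
have TT : T \in [set` `[0, T]] by apply/mem_set; rewrite /= in_itv /= lexx ltW.
have := uniq u' v g u v g sol' mr' sol mr T TT.
rewrite /u' eqxx => /(congr1 (fun z => z - u T)).
by rewrite addrAC !subrr add0r.
Qed.

Lemma uniq_ab {p kappa a b C : R}
  (Hsep : forall x : X0, (forall l : {linear X0 -> R^o}, continuous l -> l x = 0) -> x = 0) :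
  0 < p -> 0 <= a -> a < b -> MR_bound J (fun t => A t) p kappa a b C ->
  forall (f : R -> X0) u1 v1 g1 u2 v2 g2,
    SS a b f 0 u1 v1 g1 -> in_MR p kappa a b u1 v1 g1 ->
    SS a b f 0 u2 v2 g2 -> in_MR p kappa a b u2 v2 g2 ->
    {in [set` `[a, b]], u1 =1 u2}.
Proof.
move=> p0 a0 ab B f u1 v1 g1 u2 v2 g2 s1 m1 s2 m2 t Ht.
have sw := sol_sub s1 s2; have mw := MR_sub p0 m1 m2.
have := B (fun _ => 0) (in_Lpw0 _ _ _ _ p0) b ab (lexx b) _ _ _ sw mw.
rewrite Lpw_norm0 // mulr0 => /MR_norm_le0 ng0.
case: (mw) => _ _ [smg fing].
have I0 := Lpw_norm_eq0 p0 fing ng0.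
have ae0 := Lpw_int_zero a0 p0 smg I0.
apply/eqP; rewrite -subr_eq0; apply/eqP; apply: Hsep => l cl.
case: sw => _ _ [_ [_ W]] _ [w0 _].
move/set_mem: Ht; rewrite /= in_itv /= => /andP[at_ tb].
have := W l cl a t (lexx a) at_ tb.
rewrite (int_l_ae0 l (lexx a) tb ae0) /= w0 linear0 subr0; exact.
Qed.

End Main2.

Section Main3.
Context {R : realType}.
Local Notation leb := (@lebesgue_measure R).
Context {X0 X1 : normedModType R} (J : {linear X1 -> X0}) (A : R -> {linear X1 -> X0}).
Local Notation SS := (strong_sol J (fun t => A t)).

Lemma exist_ab {p kappa a b T C0 : R} {f : R -> X0} :
  0 < p -> 0 <= a -> a < b -> b <= T ->
  max_reg J (fun t => A t) p kappa 0 T ->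
  MR_bound J (fun t => A t) p kappa 0 T C0 ->
  in_Lpw p kappa a b f ->
  exists u v g, [/\ SS a b f 0 u v g, in_MR p kappa a b u v g &
    forall C, MR_bound J (fun t => A t) p kappa 0 T C ->
      MR_norm p kappa a b u v g <= C * Lpw_norm p kappa a b f].
Proof.
move=> p0 a0 ab bT [EU _] B0 fL.
pose F t := if a < t < b then f t else 0.
have FL : in_Lpw p kappa 0 T F.
  by apply: (in_Lpw_patch p0 a0 bT _ fL); apply: nearW.
have [[u [v [g [sol mr]]]] _] := EU F FL.
have b0 : 0 < b := le_lt_trans a0 ab.
have aT : a <= T := ltW (lt_le_trans ab bT).
have la : forall l : {linear X0 -> R^o}, continuous l -> l (u a) = 0.
  move=> l cl; have [a00|an0] := eqVneq a 0.
    by case: (sol) => _ _ _ _ [u0 _]; rewrite a00 u0 linear0.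
  have a0' : 0 < a by rewrite lt_neqAle eq_sym an0 a0.
  have sola := sol_restrict J A a0' aT sol.
  have mra := MR_restrict (lexx 0) aT mr.
  have := B0 F FL a a0' aT _ _ _ sola mra.
  have HF : forall t, 0 < t < a -> F t = (fun _ => 0) t.
    by move=> t /andP[_ ta]; rewrite /F ltNge (ltW ta).
  rewrite /Lpw_norm (Lpw_int_eqD HF) -/(Lpw_norm _ _ _ _ _) Lpw_norm0 // mulr0.
  move/MR_norm_le0 => ng0.
  case: (mra) => _ _ [smg fing].
  have I0 := Lpw_norm_eq0 p0 fing ng0.
  have ae0 := Lpw_int_zero (lexx 0) p0 smg I0.
  case: sola => _ _ [_ [_ W]] _ [u0 _].
  have := W l cl 0 a (lexx 0) (ltW a0') (lexx a).
  by rewrite (int_l_ae0 l (lexx 0) (lexx a) ae0) u0 linear0 subr0.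
pose u' t := if t == a then 0 else u t.
have lu' : forall l : {linear X0 -> R^o}, continuous l -> forall t, l (u' t) = l (u t).
  by move=> l cl t; rewrite /u'; case: eqP => [->|_] //; rewrite linear0 la.
have uu : forall t, a < t < b -> u' t = u t.
  by move=> t /andP[at_ _]; rewrite /u' gt_eqF.
have inab : forall t, a < t < b -> 0 < t < T.
  move=> t /andP[at_ tb]; apply/andP; split; first exact: le_lt_trans a0 at_.
  exact: lt_le_trans tb bT.
case: (sol) => iv aeJ [iu [ig W]] iA [u0 aeE].
exists u', v, g; split.
- split.
  + exact: in_Lpw_mono a0 bT iv.
  + apply: filterS aeJ => t h Ht.
    have Ht' : a < t < b by move: Ht; rewrite /= in_itv.
    rewrite uu //; apply: h; rewrite /= in_itv /=; exact: inab.
  + split; first exact: in_Lpw_eqD uu (in_Lpw_mono a0 bT iu).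
    split; first exact: in_Lpw_mono a0 bT ig.
    move=> l cl s t as_ st tb; rewrite !lu' //; apply: W => //.
      exact: le_trans a0 as_.
    exact: le_trans tb bT.
  + exact: in_Lpw_mono a0 bT iA.
  + split; first by rewrite /u' eqxx.
    apply: filterS aeE => t h Ht.
    have Ht' : a < t < b by move: Ht; rewrite /= in_itv.
    rewrite h; first by rewrite /F Ht'.
    rewrite /= in_itv /=; exact: inab.
- case: (mr) => m1 m2 m3; split.
  + exact: in_Lpw_mono a0 bT m1.
  + exact: in_Lpw_eqD uu (in_Lpw_mono a0 bT m2).
  + exact: in_Lpw_mono a0 bT m3.
- move=> C B.
  have solb := sol_restrict J A b0 bT sol.
  have mrb := MR_restrict (lexx 0) bT mr.
  have aeFb : {ae leb, forall t, 0 < t < b -> F t = if a < t < b then f t else 0}.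
    by apply: nearW.
  have := B F FL b b0 bT _ _ _ solb mrb.
  rewrite (Lpw_norm_patch p0 a0 (lexx b) aeFb).
  apply: le_trans.
  have -> : MR_norm p kappa a b u' v g = MR_norm p kappa a b u v g.
    by rewrite /MR_norm /Lpw_norm (Lpw_int_eqD uu).
  exact: MR_norm_mono p0 a0 (lexx b) mrb.
Qed.

Lemma MR_bound_mono {p kappa a b C C' : R} : C <= C' ->
  MR_bound J (fun t => A t) p kappa a b C -> MR_bound J (fun t => A t) p kappa a b C'.
Proof.
move=> CC B f fL tau h1 h2 u v g s m; apply: le_trans (B f fL tau h1 h2 u v g s m) _.
apply: ler_wpM2r CC; exact: Lpw_norm_ge0.
Qed.

Lemma Mconst_le {p kappa a b : R} (m n : R) : 0 <= n ->
  (exists C, MR_bound J (fun t => A t) p kappa a b C) ->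
  (forall C, 0 <= C -> MR_bound J (fun t => A t) p kappa a b C -> m <= C * n) ->
  (m%:E <= M_const J (fun t => A t) p kappa a b * n%:E)%E.
Proof.
move=> n0 [C0 B0] H.
have [n00|nn0] := eqVneq n 0.
  rewrite n00 mule0 lee_fin.
  have := H (Num.max C0 0); rewrite n00 mulr0; apply.
    by rewrite le_max lexx orbT.
  by apply: MR_bound_mono B0; rewrite le_max lexx.
have np : 0 < n by rewrite lt_neqAle eq_sym nn0 n0.
have : ((m / n)%:E <= M_const J (fun t => A t) p kappa a b)%E.
  apply: le_ereal_inf_tmp => _ [C [C0' BC] <-]; rewrite lee_fin ler_pdivrMr //.
  exact: H.
have n0E : (0 <= n%:E)%E by rewrite lee_fin.
move/(lee_wpmul2r n0E).
by rewrite -EFinM divfK // gt_eqF.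
Qed.

End Main3.

Theorem lemma2p2 (R : realType) (X0 X1 : completeNormedModType R)
  (J : {linear X1 -> X0}) (T : R) (A : R -> {linear X1 -> X0}) (p kappa : R) :
  0 < T ->
  continuous J -> injective J -> closure (range J) = setT ->
  (forall t, [set` `[0, T]] t -> continuous (A t)) ->
  (forall x : X1, strongly_measurable [set` `[0, T]] (fun t => A t x)) ->
  1 < p -> 0 <= kappa -> kappa < p - 1 ->
  max_reg J (fun t => A t) p kappa 0 T ->
  forall a b, 0 <= a -> a < b -> b <= T ->
  (forall f : R -> X0, in_Lpw p kappa a b f ->
     (exists u v g, [/\ strong_sol J (fun t => A t) a b f 0 u v g,
        in_MR p kappa a b u v g &
        ((MR_norm p kappa a b u v g)%:E <=
           M_const J (fun t => A t) p kappa 0 T * (Lpw_norm p kappa a b f)%:E)%E]) /\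
     (forall u1 v1 g1 u2 v2 g2,
        strong_sol J (fun t => A t) a b f 0 u1 v1 g1 -> in_MR p kappa a b u1 v1 g1 ->
        strong_sol J (fun t => A t) a b f 0 u2 v2 g2 -> in_MR p kappa a b u2 v2 g2 ->
        {in [set` `[a, b]], u1 =1 u2})) /\
  max_reg J (fun t => A t) p kappa a b /\
  (M_const J (fun t => A t) p kappa a b <= M_const J (fun t => A t) p kappa 0 T)%E.
Proof.
move=> T0 _ _ _ _ _ p1 _ _ MR a b a0 ab bT.
have p0 : 0 < p := lt_trans ltr01 p1.
have [_ [C0 B0]] := MR.
have Hsep := sep J A T0 p0 MR.
have Bab : forall C, MR_bound J (fun t => A t) p kappa 0 T C ->
    MR_bound J (fun t => A t) p kappa a b C.
  by move=> C B; exact: (bound_transfer J A p0 a0 bT B).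
have uq := uniq_ab J A Hsep p0 a0 ab (Bab C0 B0).
split.
  move=> f fL; split; last exact: uq.
  have [u [v [g [s m bnd]]]] := exist_ab J A p0 a0 ab bT MR B0 fL.
  exists u, v, g; split; [exact: s|exact: m|].
  apply: (Mconst_le J A _ _ (Lpw_norm_ge0 _ _ _ _ _)).
    by exists C0.
  by move=> C _ B; exact: bnd.
split.
  split.
    move=> f fL; split; last exact: uq.
    have [u [v [g [s m _]]]] := exist_ab J A p0 a0 ab bT MR B0 fL.
    by exists u, v, g; split; [exact: s|exact: m].
  by exists C0; exact: Bab.
apply: ereal_inf_le_tmp => _ [C [C0' BC] <-].
by exists C => //; split; [exact: C0'|exact: Bab].
Qed.
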